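(* Let $\varphi(\bm x,\bm y,\bm w,\bm z)$ be an existential LRA formula, where $\bm x,\bm y$ have the same length, and let $\bm v_1,\bm v_2,\bm w_1,\bm w_2$ be fresh tuples of variables of the same length as $\bm w$. Then over $\mathbb{R}$ the formulas $\exists^{\mathsf{ram}}\bm x,\bm y\colon \exists\bm w\colon \varphi(\bm x,\bm y,\bm w,\bm z)$ and $\exists^{\mathsf{ram}}(\bm x,\bm v_1,\bm v_2),(\bm y,\bm w_1,\bm w_2)\colon \varphi(\bm x,\bm y,\bm v_1+\bm w_2,\bm z)\wedge \bm x\neq\bm y$ are equivalent.
   Context: LRA is the first-order theory of $\langle\mathbb{R};+,<,0,1\rangle$ (rational constants allowed). Ramsey quantifier: $\exists^{\mathsf{ram}}\bm x,\bm y\colon \psi(\bm x,\bm y,\bm z)$ holds for a valuation $\bm c$ of $\bm z$ iff there is an infinite sequence $(\bm a_i)_{i\ge1}$ of pairwise distinct real vectors with $\psi(\bm a_i,\bm a_j,\bm c)$ for all $i<j$. *)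

(* Defs.v *)
From HB Require Import structures.
From mathcomp Require Import all_boot all_order all_algebra.
From mathcomp Require Import reals.
Set Implicit Arguments. Unset Strict Implicit. Unset Printing Implicit Defensive.
Import Order.TTheory GRing.Theory Num.Theory.
Local Open Scope ring_scope.

Inductive lra_term : Type :=
  | TVar : nat -> lra_term
  | TConst : rat -> lra_term
  | TAdd : lra_term -> lra_term -> lra_term.

Inductive lra_qf : Type :=
  | QLt : lra_term -> lra_term -> lra_qf
  | QEq : lra_term -> lra_term -> lra_qf
  | QNot : lra_qf -> lra_qf
  | QAnd : lra_qf -> lra_qf -> lra_qf
  | QOr : lra_qf -> lra_qf -> lra_qf.

(* Existential formula  exists u_0 ... u_{m-1}, body : in [body] the indices
   0..m-1 are the bound variables and index m+j is free variable j. *)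
Record lra_exists : Type := LraExists { ex_nvars : nat; ex_body : lra_qf }.

Fixpoint term_eval (R : realType) (e : nat -> R) (t : lra_term) : R :=
  match t with
  | TVar i => e i
  | TConst c => ratr c
  | TAdd t1 t2 => term_eval e t1 + term_eval e t2
  end.

Fixpoint qf_holds (R : realType) (e : nat -> R) (f : lra_qf) : Prop :=
  match f with
  | QLt t1 t2 => term_eval e t1 < term_eval e t2
  | QEq t1 t2 => term_eval e t1 = term_eval e t2
  | QNot g => ~ qf_holds e g
  | QAnd g h => qf_holds e g /\ qf_holds e h
  | QOr g h => qf_holds e g \/ qf_holds e h
  end.

Definition ex_holds (R : realType) (e : nat -> R) (f : lra_exists) : Prop :=
  exists u : nat -> R,
    qf_holds (fun i => if (i < ex_nvars f)%N then u i else e (i - ex_nvars f)%N)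
             (ex_body f).

(* j-th coordinate of a row vector (0 out of range). *)
Definition vget (R : realType) (n : nat) (v : 'rV[R]_n) (j : nat) : R :=
  if @insub nat (fun k => (k < n)%N) 'I_n j is Some i then v 0 i else 0.

(* Valuation for phi(x, y, w, z): free variables 0..n-1 are x, n..2n-1 are y,
   2n..2n+p-1 are w, and 2n+p+k is z_k. *)
Definition env4 (R : realType) (n p : nat) (x y : 'rV[R]_n) (w : 'rV[R]_p)
    (z : nat -> R) : nat -> R :=
  fun j =>
    if (j < n)%N then vget x j
    else if (j < n + n)%N then vget y (j - n)
    else if (j < n + n + p)%N then vget w (j - (n + n))
    else z (j - (n + n + p))%N.

Definition ramsey (T : Type) (P : T -> T -> Prop) : Prop :=
  exists a : nat -> T, injective a /\ forall i j : nat, (i < j)%N -> P (a i) (a j).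

(* Main.v *)
Require Import Defs.
From HB Require Import structures.
From mathcomp Require Import all_boot all_order all_algebra.
From mathcomp Require Import reals ring lra zify.
From Stdlib Require Import ClassicalEpsilon Classical.
From Stdlib Require List.
Set Implicit Arguments. Unset Strict Implicit. Unset Printing Implicit Defensive.
Import Order.TTheory GRing.Theory Num.Theory.
Local Open Scope ring_scope.

Section Elim.
Variable R : realType.
Variable X : Type.

Record form := Form { fc : nat -> R; f1 : X -> R; f2 : X -> R }.

Definition ev (N : nat) (f : form) (V : nat -> R) (x y : X) : R :=
  \sum_(k < N) fc f k * V k + f1 f x + f2 f y.

Lemma ev_ext N f V V' x y : (forall k, (k < N)%N -> V k = V' k) ->
  ev N f V x y = ev N f V' x y.
Proof. move=> H; rewrite /ev; congr (_ + _ + _); apply: eq_bigr => k _; by rewrite H. Qed.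

Definition fadd f g := Form (fun k => fc f k + fc g k) (fun x => f1 f x + f1 g x)
  (fun y => f2 f y + f2 g y).
Definition fscale (a : R) f := Form (fun k => a * fc f k) (fun x => a * f1 f x)
  (fun y => a * f2 f y).
Definition fconst (a : R) := Form (fun _ => 0) (fun _ => a) (fun _ => 0).

Lemma ev_add N f g V x y : ev N (fadd f g) V x y = ev N f V x y + ev N g V x y.
Proof.
rewrite /ev /= (eq_bigr (fun k : 'I_N => fc f k * V k + fc g k * V k)); last first.
  by move=> k _; rewrite mulrDl.
rewrite big_split /=; ring.
Qed.

Lemma ev_scale N a f V x y : ev N (fscale a f) V x y = a * ev N f V x y.
Proof.
rewrite /ev /= (eq_bigr (fun k : 'I_N => a * (fc f k * V k))); last first.
  by move=> k _; rewrite mulrA.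
rewrite -mulr_sumr; ring.
Qed.

Lemma ev_const N a V x y : ev N (fconst a) V x y = a.
Proof. rewrite /ev /= big1 ?add0r ?addr0 // => k _; by rewrite mul0r. Qed.

Lemma ev_S N f V x y : ev N.+1 f V x y = ev N f V x y + fc f N * V N.
Proof. rewrite /ev big_ord_recr /=; ring. Qed.

Definition upd (V : nat -> R) N t := fun k => if k == N then t else V k.

Lemma ev_upd N f V t x y : ev N f (upd V N t) x y = ev N f V x y.
Proof. apply: ev_ext => k Hk; by rewrite /upd (ltn_eqF Hk). Qed.

Definition subst N c f := fadd f (fscale (fc f N) c).

Lemma ev_subst N c f W x y :
  ev N (subst N c f) W x y = ev N.+1 f (upd W N (ev N c W x y)) x y.
Proof. by rewrite ev_S ev_upd /upd eqxx ev_add ev_scale. Qed.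

Definition root N f := fscale (- (fc f N)^-1) f.

Lemma ev_root N f V x y : fc f N != 0 ->
  ev N.+1 f V x y = fc f N * (V N - ev N (root N f) V x y).
Proof.
move=> nz; rewrite ev_S ev_scale; set a := fc f N; set e := ev N f V x y.
rewrite mulrBr mulrA mulrN mulfV // mulN1r opprK addrC //.
Qed.

Definition cands_gen {T} (z : T) (p1 m1 : T -> T) (mid : T -> T -> T) (rs : list T) :=
  z :: List.app rs (List.app (List.map p1 rs) (List.app (List.map m1 rs)
        (List.flat_map (fun r => List.map (mid r) rs) rs))).

Lemma cands_map {T U} (e : T -> U) z p1 m1 mid z' p1' m1' mid' rs :
  e z = z' -> (forall r, e (p1 r) = p1' (e r)) -> (forall r, e (m1 r) = m1' (e r)) ->
  (forall r r', e (mid r r') = mid' (e r) (e r')) ->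
  forall c0, List.In c0 (cands_gen z' p1' m1' mid' (List.map e rs)) ->
  exists c, List.In c (cands_gen z p1 m1 mid rs) /\ e c = c0.
Proof.
move=> ez ep em emid c0 /= [<-|]; first by exists z; split; [left|].
move=> /List.in_app_iff [/List.in_map_iff [r [<- Hr]]|].
  by exists r; split=> //; right; apply/List.in_app_iff; left.
move=> /List.in_app_iff [/List.in_map_iff [r' [<- /List.in_map_iff [r [<- Hr]]]]|].
  exists (p1 r); split=> //; right; apply/List.in_app_iff; right;
  apply/List.in_app_iff; left; apply/List.in_map_iff; by exists r.
move=> /List.in_app_iff [/List.in_map_iff [r' [<- /List.in_map_iff [r [<- Hr]]]]|].
  exists (m1 r); split=> //; right; apply/List.in_app_iff; right;
  apply/List.in_app_iff; right; apply/List.in_app_iff; left;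
  apply/List.in_map_iff; by exists r.
move=> /List.in_flat_map [r' [/List.in_map_iff [r [<- Hr]]]].
move=> /List.in_map_iff [s' [<- /List.in_map_iff [s [<- Hs]]]].
exists (mid r s); split; last by rewrite emid.
right; apply/List.in_app_iff; right; apply/List.in_app_iff; right;
apply/List.in_app_iff; right; apply/List.in_flat_map; exists r; split=> //.
apply/List.in_map_iff; by exists s.
Qed.

Definition cands_real (rs : list R) :=
  cands_gen 0 (fun r => r + 1) (fun r => r + (-1)) (fun r r' => 2^-1 * (r + r')) rs.

Lemma list_max (P : R -> Prop) (rs : list R) :
  (exists r, List.In r rs /\ P r) ->
  exists m, List.In m rs /\ P m /\ forall r, List.In r rs -> P r -> r <= m.
Proof.
elim: rs => [[r [[] _]]|a rs IH] [r [Hin Pr]].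
case: (classic (exists r, List.In r rs /\ P r)) => [/IH [m [Hm [Pm Hmax]]]|Hno].
  case: (classic (P a)) => Pa.
    case: (leP a m) => am.
      exists m; split; [by right|split=> //] => r' [<-|] //; exact: Hmax.
    exists a; split; [by left|split=> //] => r' [<-|] // Hr' Pr'.
    exact: (le_trans (Hmax _ Hr' Pr') (ltW am)).
  exists m; split; [by right|split=> //] => r' [<-|] //; exact: Hmax.
case: Hin => [eq|Hin]; last by exfalso; apply: Hno; exists r.
subst r; exists a; split; [by left|split=> //] => r' [<-|] // Hr' Pr'.
by exfalso; apply: Hno; exists r'.
Qed.

Lemma list_min (P : R -> Prop) (rs : list R) :
  (exists r, List.In r rs /\ P r) ->
  exists m, List.In m rs /\ P m /\ forall r, List.In r rs -> P r -> m <= r.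
Proof.
elim: rs => [[r [[] _]]|a rs IH] [r [Hin Pr]].
case: (classic (exists r, List.In r rs /\ P r)) => [/IH [m [Hm [Pm Hmax]]]|Hno].
  case: (classic (P a)) => Pa.
    case: (leP m a) => am.
      exists m; split; [by right|split=> //] => r' [<-|] //; exact: Hmax.
    exists a; split; [by left|split=> //] => r' [<-|] // Hr' Pr'.
    exact: (le_trans (ltW am) (Hmax _ Hr' Pr')).
  exists m; split; [by right|split=> //] => r' [<-|] //; exact: Hmax.
case: Hin => [eq|Hin]; last by exfalso; apply: Hno; exists r.
subst r; exists a; split; [by left|split=> //] => r' [<-|] // Hr' Pr'.
by exfalso; apply: Hno; exists r'.
Qed.

Lemma sg_pos (a b : R) : b < a -> Num.sg (a - b) = 1.
Proof. by move=> h; apply: gtr0_sg; rewrite subr_gt0. Qed.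
Lemma sg_neg (a b : R) : a < b -> Num.sg (a - b) = -1.
Proof. by move=> h; apply: ltr0_sg; rewrite subr_lt0. Qed.

Lemma real_cand (rs : list R) (t : R) : exists c, List.In c (cands_real rs) /\
  forall r, List.In r rs -> Num.sg (c - r) = Num.sg (t - r).
Proof.
case: (classic (List.In t rs)) => Ht.
  by exists t; split=> //; right; apply/List.in_app_iff; left.
have side : forall r, List.In r rs -> r < t \/ t < r.
  move=> r Hr; case: (ltgtP r t) => h; [by left|by right|by subst r].
case: (classic (exists r, List.In r rs /\ r < t)) => [Hlo|Hnlo];
case: (classic (exists r, List.In r rs /\ t < r)) => [Hhi|Hnhi].
- have [lo [Hl [lot Hlm]]] := list_max Hlo.
  have [hi [Hh [thi Hhm]]] := list_min Hhi.
  exists (2^-1 * (lo + hi)); split.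
    right; apply/List.in_app_iff; right; apply/List.in_app_iff; right;
    apply/List.in_app_iff; right; apply/List.in_flat_map; exists lo; split=> //.
    apply/List.in_map_iff; by exists hi.
  move=> r Hr; case: (side r Hr) => h.
    have := Hlm r Hr h => rl; rewrite !sg_pos //; lra.
  have := Hhm r Hr h => rl; rewrite !sg_neg //; lra.
- have [lo [Hl [lot Hlm]]] := list_max Hlo.
  exists (lo + 1); split.
    right; apply/List.in_app_iff; right; apply/List.in_app_iff; left;
    apply/List.in_map_iff; by exists lo.
  move=> r Hr; case: (side r Hr) => h; last by exfalso; apply: Hnhi; exists r.
  have := Hlm r Hr h => rl; rewrite !sg_pos //; lra.
- have [hi [Hh [thi Hhm]]] := list_min Hhi.
  exists (hi + (-1)); split.
    right; apply/List.in_app_iff; right; apply/List.in_app_iff; right;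
    apply/List.in_app_iff; left; apply/List.in_map_iff; by exists hi.
  move=> r Hr; case: (side r Hr) => h; first by exfalso; apply: Hnlo; exists r.
  have := Hhm r Hr h => rl; rewrite !sg_neg //; lra.
- exists 0; split; first by left.
  move=> r Hr; case: (side r Hr) => h; [by exfalso; apply: Hnlo; exists r|
    by exfalso; apply: Hnhi; exists r].
Qed.

Definition cands N (L : list form) : list form :=
  cands_gen (fconst 0) (fun r => fadd r (fconst 1)) (fun r => fadd r (fconst (-1)))
    (fun r r' => fscale (2^-1) (fadd r r'))
    (List.map (root N) (List.filter (fun f => fc f N != 0) L)).

Lemma cand_lemma N L V x y : exists c, List.In c (cands N L) /\
  forall f, List.In f L ->
   Num.sg (ev N.+1 f (upd V N (ev N c V x y)) x y) = Num.sg (ev N.+1 f V x y).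
Proof.
set e := fun r => ev N r V x y.
have [c0 [Hc0 Hsg]] := real_cand (List.map e (List.map (root N)
   (List.filter (fun f => fc f N != 0) L))) (V N).
have h1 : e (fconst 0) = 0 by rewrite /e ev_const.
have h2 : forall r, e (fadd r (fconst 1)) = e r + 1 by move=> r; rewrite /e ev_add ev_const.
have h3 : forall r, e (fadd r (fconst (-1))) = e r + (-1) by move=> r; rewrite /e ev_add ev_const.
have h4 : forall r r', e (fscale (2^-1) (fadd r r')) = 2^-1 * (e r + e r').
  by move=> r r'; rewrite /e ev_scale ev_add.
have [c [Hc ec]] := @cands_map _ _ e (fconst 0) (fun r => fadd r (fconst 1))
  (fun r => fadd r (fconst (-1))) (fun r r' => fscale (2^-1) (fadd r r'))
  0 (fun r => r + 1) (fun r => r + (-1))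
  (fun r r' => 2^-1 * (r + r')) (List.map (root N)
   (List.filter (fun f => fc f N != 0) L)) h1 h2 h3 h4 c0 Hc0.
exists c; split=> // f Hf.
have -> : ev N c V x y = c0 by [].
case: (eqVneq (fc f N) 0) => nz.
  by rewrite !ev_S nz !mul0r ev_upd.
rewrite !(ev_root _ _ _ nz) !sgrM ev_upd /upd eqxx.
congr (_ * _); apply: Hsg.
apply/List.in_map_iff; exists (root N f); split=> //.
apply/List.in_map_iff; exists f; split=> //; exact/List.filter_In.
Qed.

Definition sol := ((X -> nat -> R) * (X -> nat -> R))%type.
Definition solv (s : sol) x y := fun k => s.1 x k + s.2 y k.

Definition extend N (c : form) (s : sol) : sol :=
  (fun x k => if k == N then \sum_(k' < N) fc c k' * s.1 x k' + f1 c x else s.1 x k,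
   fun y k => if k == N then \sum_(k' < N) fc c k' * s.2 y k' + f2 c y else s.2 y k).

Lemma solv_extend N c s x y k :
  solv (extend N c s) x y k = upd (solv s x y) N (ev N c (solv s x y) x y) k.
Proof.
rewrite /solv /extend /upd /=; case: (k == N) => //.
rewrite /ev /solv.
under [in RHS]eq_bigr => i _ do rewrite mulrDr.
rewrite big_split /=; ring.
Qed.

Fixpoint elim (N : nat) (L : list form) : list sol :=
  match N with
  | 0 => [:: (fun _ _ => 0, fun _ _ => 0)]
  | N'.+1 => List.flat_map (fun c => List.map (extend N' c) (elim N' (List.map (subst N' c) L)))
               (cands N' L)
  end.

Lemma elimP N : forall L V x y, exists s, List.In s (elim N L) /\
  forall f, List.In f L -> Num.sg (ev N f (solv s x y) x y) = Num.sg (ev N f V x y).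
Proof.
elim: N => [|N IH] L V x y.
  exists (fun _ _ => 0, fun _ _ => 0); split; first by left.
  by move=> f _; congr Num.sg; apply: ev_ext.
have [c [Hc Hcs]] := cand_lemma N L V x y.
have [s [Hs Hss]] := IH (List.map (subst N c) L) V x y.
exists (extend N c s); split.
  apply/List.in_flat_map; exists c; split=> //; apply/List.in_map_iff; by exists s.
move=> f Hf.
rewrite (@ev_ext _ _ _ (upd (solv s x y) N (ev N c (solv s x y) x y))); last first.
  by move=> k _; rewrite solv_extend.
rewrite -ev_subst Hss; last by apply/List.in_map_iff; exists f.
by rewrite ev_subst Hcs.
Qed.

End Elim.
Section Ramsey.
Local Open Scope nat_scope.
Definition infs (S : nat -> Prop) := forall m, exists j, m <= j /\ S j.

Lemma pigeon K (c : nat -> nat) S : infs S -> (forall j, S j -> c j < K) ->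
  exists k, k < K /\ infs (fun j => S j /\ c j = k).
Proof.
elim: K S => [|K IH] S HS Hc.
  by have [j [_ Sj]] := HS 0; have := Hc j Sj.
case: (classic (infs (fun j => S j /\ c j = K))) => [H|H]; first by exists K.
have [m Hm] : exists m, forall j, m <= j -> ~ (S j /\ c j = K).
  apply: NNPP => N1; apply: H => m; apply: NNPP => N2; apply: N1; exists m.
  by move=> j mj Hj; apply: N2; exists j.
pose S' := fun j => S j /\ m <= j.
have HS' : infs S'.
  move=> m'; have [j [jm Sj]] := HS (maxn m m'); exists j; split.
    exact: leq_trans (leq_maxr _ _) jm.
  by split=> //; exact: leq_trans (leq_maxl _ _) jm.
have Hc' : forall j, S' j -> c j < K.
  move=> j [Sj mj]; have := Hc j Sj; rewrite ltnS leq_eqVlt => /orP [/eqP E|//].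
  by exfalso; apply: (Hm j mj).
have [k [kK Hk]] := IH S' HS' Hc'.
exists k; split; first by rewrite ltnS ltnW.
move=> m'; have [j [jm [[Sj _] cj]]] := Hk m'; by exists j.
Qed.

Variable K : nat.
Variable col : nat -> nat -> nat.
Hypothesis colK : forall i j, i < j -> col i j < K.

Definition stT := (nat * (nat -> Prop))%type.
Definition Inv (st : stT) := infs st.2 /\ forall j, st.2 j -> st.1 < j.
Definition cof (st : stT) := epsilon (inhabits 0)
  (fun k => k < K /\ infs (fun j => st.2 j /\ col st.1 j = k)).
Definition Tset (st : stT) := fun j => st.2 j /\ col st.1 j = cof st.
Definition nxt (st : stT) := epsilon (inhabits 0) (fun j => Tset st j).
Definition step (st : stT) : stT := (nxt st, fun j => Tset st j /\ nxt st < j).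

Lemma step_ok st : Inv st -> cof st < K /\ Tset st (nxt st) /\ Inv (step st).
Proof.
move=> [HS Hlt].
have [k Hk] := @pigeon K (col st.1) st.2 HS (fun j Sj => colK (Hlt j Sj)).
have [cK cinf] : cof st < K /\ infs (fun j => st.2 j /\ col st.1 j = cof st).
  exact: (epsilon_spec (inhabits 0) (fun k => k < K /\ infs (fun j => st.2 j /\ col st.1 j = k)) (ex_intro _ k Hk)).
have Tn : Tset st (nxt st).
  have [j [_ Tj]] := cinf 0.
  exact: (epsilon_spec (inhabits 0) (fun j => Tset st j) (ex_intro _ j Tj)).
split=> //; split=> //; split; last by move=> j [].
move=> m; have [j [jm Tj]] := cinf (maxn m (nxt st).+1); exists j; split.
  exact: leq_trans (leq_maxl _ _) jm.
by split=> //; exact: leq_trans (leq_maxr _ _) jm.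
Qed.

Definition st0 : stT := (0, fun j : nat => is_true (0 < j)).
Definition stk k := iter k step st0.

Lemma Inv_stk k : Inv (stk k).
Proof.
elim: k => [|k IH].
  split=> [m|//]; exists m.+1; by split.
by rewrite /stk iterS; have [_ [_ H]] := step_ok IH.
Qed.

Lemma stk_sub k d j : (stk (k + d)).2 j -> (stk k).2 j.
Proof.
elim: d => [|d IH]; first by rewrite addn0.
by rewrite addnS /stk iterS => -[[H _] _]; apply: IH.
Qed.

Lemma stk_T k d : Tset (stk k) (stk (k + d).+1).1.
Proof.
case: d => [|d].
  by rewrite addn0 /stk iterS; have [_ [H _]] := step_ok (Inv_stk k).
rewrite /stk iterS /=.
have [_ [H _]] := step_ok (Inv_stk (k + d.+1)).
have H1 : (stk (k.+1 + d)).2 (nxt (stk (k + d.+1))).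
  by rewrite addSn -addnS; case: H.
have := stk_sub H1; by rewrite /stk iterS => -[].
Qed.

Lemma ramsey_nat : exists (b : nat -> nat) c,
  forall i j, i < j -> b i < b j /\ col (b i) (b j) = c.
Proof.
pose a k := (stk k).1.
pose cc k := cof (stk k).
have key : forall k l, k < l -> a k < a l /\ col (a k) (a l) = cc k.
  move=> k l kl.
  have E : l = (k + (l - k.+1)).+1 by rewrite -addnS subnSK // subnKC // ltnW.
  have := stk_T k (l - k.+1); rewrite -E => -[HS Hc].
  split=> //; have [_ H] := Inv_stk k; exact: H.
have ccK : forall k, cc k < K by move=> k; have [H _] := step_ok (Inv_stk k).
have [c [_ Hc]] := @pigeon K cc (fun _ => True) (fun m => ex_intro _ m (conj (leqnn m) I))
  (fun j _ => ccK j).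
pose P i k := i < k /\ cc k = c.
have Pex : forall i, exists k, P i k.
  by move=> i; have [k [ik [_ ck]]] := Hc i.+1; exists k.
pose e := fix e n := match n with 0 => epsilon (inhabits 0) (P 0)
                                | n'.+1 => epsilon (inhabits 0) (P (e n')) end.
have eP : forall n, P (e n) (e n.+1).
  move=> n; exact: (epsilon_spec (inhabits 0) (P (e n)) (Pex (e n))).
have ec : forall n, cc (e n) = c.
  case=> [|n]; last by have [_ ->] := eP n.
  by have [_ ->] := epsilon_spec (inhabits 0) (P 0) (Pex 0).
have emono : {homo e : i j / i < j >-> i < j}.
  apply: homo_ltn; [exact: ltn_trans|move=> i; by have [] := eP i].
exists (fun i => a (e i)), c => i j ij.
have [H1 H2] := key _ _ (emono _ _ ij); by rewrite H2 ec.
Qed.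

End Ramsey.

Section Link.
Variables (R : realType) (n p : nat) (phi : lra_exists) (z : nat -> R).
Let X := 'rV[R]_n.
Definition mm := ex_nvars phi.
Definition NN := (mm + p)%N.

Definition fdelta (i : nat) : form R X := Form (fun k => (k == i)%:R) (fun _ => 0) (fun _ => 0).

Lemma ev_delta N i V (x y : X) : (i < N)%N -> ev N (fdelta i) V x y = V i.
Proof.
move=> Hi; rewrite /ev /= addr0 addr0 (bigD1 (Ordinal Hi)) //= eqxx mul1r big1 ?addr0 //.
move=> k Hk; rewrite (_ : (nat_of_ord k == i) = false) ?mul0r //.
apply/negbTE; apply: contra Hk => /eqP e; apply/eqP/val_inj; exact: e.
Qed.

Lemma vget_ord (q : nat) (v : 'rV[R]_q) (j : 'I_q) : vget v j = v 0 j.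
Proof. by rewrite /vget (insubT (fun k => (k < q)%N) (ltn_ord j)); congr (v 0 _); apply: val_inj. Qed.

Lemma vget_row q (F : nat -> R) k : (k < q)%N -> vget (\row_(j < q) F j) k = F k.
Proof. move=> Hk; change k with (nat_of_ord (Ordinal Hk)); by rewrite vget_ord mxE. Qed.

Definition wofV (V : nat -> R) : 'rV[R]_p := \row_(j < p) V (mm + j)%N.
Definition EV (V : nat -> R) (x y : X) : nat -> R :=
  fun i => if (i < mm)%N then V i else env4 x y (wofV V) z (i - mm).

Fixpoint fot (t : lra_term) : form R X :=
  match t with
  | TVar i => if (i < mm)%N then fdelta i else
     let j := (i - mm)%N in
     if (j < n)%N then Form (fun _ => 0) (fun x : X => vget x j) (fun _ => 0)
     else if (j < n + n)%N then Form (fun _ => 0) (fun _ => 0) (fun y : X => vget y (j - n))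
     else if (j < n + n + p)%N then fdelta (mm + (j - (n + n)))
     else fconst X (z (j - (n + n + p)))
  | TConst c => fconst X (ratr c)
  | TAdd a b => fadd (fot a) (fot b)
  end.

Lemma ev_zero (N : nat) (g1 g2 : X -> R) V x y :
  ev N (Form (fun _ => 0) g1 g2) V x y = g1 x + g2 y.
Proof. by rewrite /ev /= big1 ?add0r // => k _; rewrite mul0r. Qed.

Lemma fot_ok t V x y : term_eval (EV V x y) t = ev NN (fot t) V x y.
Proof.
elim: t => [i|c|a IHa b IHb] /=; last first.
- by rewrite IHa IHb ev_add.
- by rewrite ev_const.
rewrite /EV; case: ifP => im.
  by rewrite ev_delta // /NN ltn_addr.
rewrite /env4; case: ifP => h1; first by rewrite ev_zero addr0.
case: ifP => h2; first by rewrite ev_zero add0r.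
case: ifP => h3; last by rewrite ev_const.
have hp : (i - mm - (n + n) < p)%N by rewrite ltn_subLR // leqNgt h2.
rewrite ev_delta; last by rewrite /NN ltn_add2l.
by rewrite /wofV (@vget_row p (fun j => V (mm + j)%N)).
Qed.

Lemma te_ext (E E' : nat -> R) t : (forall i, E i = E' i) -> term_eval E t = term_eval E' t.
Proof. move=> H; elim: t => [i|c|a IHa b IHb] /=; by rewrite ?H ?IHa ?IHb. Qed.

Fixpoint atoms (f : lra_qf) : list (lra_term * lra_term) :=
  match f with
  | QLt a b => [:: (a, b)]
  | QEq a b => [:: (a, b)]
  | QNot g => atoms g
  | QAnd g h => List.app (atoms g) (atoms h)
  | QOr g h => List.app (atoms g) (atoms h)
  end.

Lemma lt_sgE (u v : R) : (u < v) <-> Num.sg (u - v) = -1.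
Proof.
split=> h; first by apply: ltr0_sg; rewrite subr_lt0.
by rewrite -subr_lt0 -(sgr_cp0 (u - v)).1.2 h eqxx.
Qed.

Lemma eq_sgE (u v : R) : (u = v) <-> Num.sg (u - v) = 0.
Proof.
split=> h; first by rewrite h subrr sgr0.
by apply/eqP; rewrite -subr_eq0 -sgr_eq0 h.
Qed.

Lemma qf_sg (E E' : nat -> R) f :
  (forall a b, List.In (a, b) (atoms f) ->
     Num.sg (term_eval E a - term_eval E b) = Num.sg (term_eval E' a - term_eval E' b)) ->
  (qf_holds E f <-> qf_holds E' f).
Proof.
elim: f => [a b|a b|g IH|g IHg h IHh|g IHg h IHh] /= H.
- move: (H a b (or_introl erefl)) => e; split=> h; apply/lt_sgE;
    [rewrite -e; exact/lt_sgE|rewrite e; exact/lt_sgE].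
- move: (H a b (or_introl erefl)) => e; split=> h; apply/eq_sgE;
    [rewrite -e; exact: (proj1 (eq_sgE _ _) h)|rewrite e; exact: (proj1 (eq_sgE _ _) h)].
- have [A B] := IH H; split=> h1 h2; [apply: h1; exact: B|apply: h1; exact: A].
- have [A B] := IHg (fun a b h => H a b (List.in_or_app _ _ _ (or_introl h))).
  have [C D] := IHh (fun a b h => H a b (List.in_or_app _ _ _ (or_intror h))).
  by split=> -[h1 h2]; split; [apply: A|apply: C|apply: B|apply: D].
- have [A B] := IHg (fun a b h => H a b (List.in_or_app _ _ _ (or_introl h))).
  have [C D] := IHh (fun a b h => H a b (List.in_or_app _ _ _ (or_intror h))).
  by split=> -[h1|h2]; [left; apply: A|right; apply: C|left; apply: B|right; apply: D].
Qed.

Lemma qf_ext (E E' : nat -> R) f : (forall i, E i = E' i) -> qf_holds E f -> qf_holds E' f.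
Proof.
move=> H; apply (qf_sg (E:=E) (E':=E')) => a b _; by rewrite !(te_ext a H) !(te_ext b H).
Qed.

Definition afm (ab : lra_term * lra_term) : form R X :=
  fadd (fot ab.1) (fscale (-1) (fot ab.2)).

Definition LL := List.map afm (atoms (ex_body phi)).

Lemma ev_afm ab V x y :
  ev NN (afm ab) V x y = term_eval (EV V x y) ab.1 - term_eval (EV V x y) ab.2.
Proof. by rewrite ev_add ev_scale !fot_ok mulN1r. Qed.

Definition Good (s : sol R X) x y := qf_holds (EV (solv s x y) x y) (ex_body phi).

Lemma witness_good (x y : X) (w : 'rV[R]_p) : ex_holds (env4 x y w z) phi ->
  exists s, List.In s (elim NN LL) /\ Good s x y.
Proof.
move=> [u Hu].
pose V k := if (k < mm)%N then u k else vget w (k - mm).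
have HV : qf_holds (EV V x y) (ex_body phi).
  apply: (qf_ext _ Hu) => i; rewrite /EV /V; case: ifP => him //.
  congr (env4 _ _ _ _ _); apply/rowP => j; rewrite mxE ltnNge leq_addr /=.
  by rewrite addKn vget_ord.
have [s [Hs Hss]] := elimP NN LL V x y.
exists s; split=> //.
apply/(qf_sg (E' := EV V x y)) => // a b Hab.
have := Hss (afm (a, b)) (List.in_map _ _ _ Hab); by rewrite !ev_afm.
Qed.

End Link.

Theorem mainTheorem5 (R : realType) (n p : nat) (phi : lra_exists) (z : nat -> R) :
  ramsey (fun x y : 'rV[R]_n => exists w : 'rV[R]_p, ex_holds (env4 x y w z) phi)
  <->
  ramsey (fun (A B : 'rV[R]_n * 'rV[R]_p * 'rV[R]_p) =>
            ex_holds (env4 A.1.1 B.1.1 (A.1.2 + B.2) z) phi /\ A.1.1 <> B.1.1).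
Proof.
split.
- move=> [a [ainj Ha]].
  set sols := elim (NN p phi) (LL n p phi z).
  pose s0 : sol R 'rV[R]_n := (fun _ _ => 0, fun _ _ => 0).
  pose Rk c i j := Good p phi z (List.nth c sols s0) (a i) (a j).
  have HR : forall i j, (i < j)%N -> exists c, (c < length sols)%N /\ Rk c i j.
    move=> i j ij; have [w Hw] := Ha i j ij.
    have [s [Hs Hg]] := witness_good Hw.
    have [c [Hc Hn]] := List.In_nth _ _ s0 Hs.
    exists c; split; last by rewrite /Rk Hn.
    by apply/ssrnat.ltP.
  pose col i j := epsilon (inhabits 0%N) (fun c => (c < length sols)%N /\ Rk c i j).
  have colP : forall i j, (i < j)%N -> (col i j < length sols)%N /\ Rk (col i j) i j.
    move=> i j ij.
    exact: (epsilon_spec (inhabits 0%N) (fun c => (c < length sols)%N /\ Rk c i j) (HR i j ij)).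
  have [b [c Hb]] := @ramsey_nat (length sols) col (fun i j ij => (colP i j ij).1).
  set s := List.nth c sols s0.
  have HG : forall i j, (i < j)%N -> Good p phi z s (a (b i)) (a (b j)).
    move=> i j ij; have [bij cij] := Hb i j ij; have := (colP _ _ bij).2; by rewrite cij.
  have binj : forall i j, b i = b j -> i = j.
    move=> i j E; case: (ltngtP i j) => h //;
      [have := (Hb i j h).1|have := (Hb j i h).1]; by rewrite E ltnn.
  exists (fun k => (a (b k), \row_(j < p) s.1 (a (b k)) (mm phi + j)%N,
                    \row_(j < p) s.2 (a (b k)) (mm phi + j)%N)).
  split.
    move=> i j /(congr1 (fun t => t.1.1)) /= /ainj; exact: binj.
  move=> i j ij /=; split; last first.
    by move=> /ainj /binj E; move: ij; rewrite E ltnn.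
  exists (solv s (a (b i)) (a (b j))).
  apply: (qf_ext _ (HG i j ij)) => k.
  rewrite /EV /mm /=; case: ifP => // _; congr (env4 _ _ _ _ _).
  apply/rowP => q; by rewrite !mxE /solv.
- move=> [A [_ HA]]; exists (fun k => (A k).1.1); split.
    move=> i j E; case: (ltngtP i j) => h //.
      by have [_ H] := HA i j h; exfalso; apply: H.
    by have [_ H] := HA j i h; exfalso; apply: H; rewrite E.
  move=> i j ij; have [H _] := HA i j ij; by exists ((A i).1.2 + (A j).2).
Qed.
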